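(* Let $P(z)=a_0z^n+a_1z^{n-1}+\dots+a_n$ with $a_j\in\mathbb{C}$, $a_0\neq 0$, $n\ge 1$, and define $f(r,\theta)=\frac{P'(re^{i\theta})}{P(re^{i\theta})}$ for $r\ge 0$, $\theta\in\mathbb{R}$ with $P(re^{i\theta})\neq 0$. Let $0<a<b$ and suppose the closed annulus $K(a,b)=\{z\in\mathbb{C}: a\le|z|\le b\}$ contains no root of $P$. Then $$\left|\frac{\partial}{\partial\theta}f(r,\theta)\right|\le \frac{9nb}{(b-a)^2}\qquad\text{for } r=a+k\tfrac{b-a}{3},\ k=1,2,\ \theta\in\mathbb{R}.$$
   Context: $P'$ denotes the derivative of $P$. *)

(* Defs.v *)
From Stdlib Require Import Reals.
From Coquelicot Require Import Coquelicot.
Open Scope R_scope.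

Definition poly_eval (n : nat) (a : nat -> C) (z : C) : C :=
  sum_n (fun j => Cmult (a j) (Cpow z (n - j))) n.

(* P'(z) = sum_j (n-j) a_j z^(n-j-1)  (the term j = n vanishes) *)
Definition poly_deriv_eval (n : nat) (a : nat -> C) (z : C) : C :=
  sum_n (fun j => Cmult (RtoC (INR (n - j))) (Cmult (a j) (Cpow z (n - j - 1)))) n.

Definition polar (r theta : R) : C := (r * cos theta, r * sin theta).

Definition logder (n : nat) (a : nat -> C) (r theta : R) : C :=
  Cdiv (poly_deriv_eval n a (polar r theta)) (poly_eval n a (polar r theta)).

(* Main.v *)
Require Import Defs.
From Stdlib Require Import Reals Lra List.
From Coquelicot Require Import Coquelicot.
Open Scope R_scope.

Definition sumC (l : list C) : C := fold_right Cplus (RtoC 0) l.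

Definition C0 : C := RtoC 0.

Module MC.
Set Warnings "-notation-overridden,-ambiguous-paths,-notation-incompatible-prefix".
From mathcomp Require Import all_boot all_algebra.
From mathcomp Require Import Rstruct complex ring.
Import GRing.Theory Num.Theory.
Local Open Scope ring_scope.

Definition phi (z : C) : R[i] := Complex (fst z) (snd z).
Definition psi (w : R[i]) : C := (complex.Re w, complex.Im w).

Lemma phi_psi w : phi (psi w) = w. Proof. by case: w. Qed.
Lemma psi_phi z : psi (phi z) = z. Proof. by case: z. Qed.
Lemma phi_inj u v : phi u = phi v -> u = v.
Proof. by move=> /(congr1 psi); rewrite !psi_phi. Qed.

Lemma phi_add u v : phi (Cplus u v) = phi u + phi v.
Proof. by case: u => x y; case: v => x' y'. Qed.
Lemma phi_opp u : phi (Copp u) = - phi u.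
Proof. by case: u => x y. Qed.
Lemma phi_sub u v : phi (Cminus u v) = phi u - phi v.
Proof. by rewrite /Cminus phi_add phi_opp. Qed.
Lemma phi_mul u v : phi (Cmult u v) = phi u * phi v.
Proof. by case: u => x y; case: v => x' y'. Qed.
Lemma phi_inv u : phi (Cinv u) = (phi u)^-1.
Proof.
case: u => x y; rewrite /phi /Cinv /= /GRing.inv /=.
congr (Complex _ _); rewrite -!RpowE //; rewrite /Rdiv; exact: (esym (Ropp_mult_distr_l _ _)).
Qed.
Lemma phi_div u v : phi (Cdiv u v) = phi u / phi v.
Proof. by rewrite /Cdiv phi_mul phi_inv. Qed.
Lemma phi_pow u k : phi (Cpow u k) = phi u ^+ k.
Proof. elim: k => [|k IH] //=; by rewrite phi_mul IH exprS. Qed.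
Lemma phi_RtoC x : phi (RtoC x) = (x%:C)%C.
Proof. by []. Qed.
Lemma phi_nat m : phi (RtoC (INR m)) = m%:R.
Proof. by rewrite phi_RtoC INRE rmorph_nat. Qed.
Lemma phi_0 : phi (RtoC 0) = 0. Proof. by []. Qed.

Lemma phi_sum_n (f : nat -> C) m : phi (sum_n f m) = \sum_(j < m.+1) phi (f j).
Proof.
elim: m => [|m IH]; first by rewrite sum_O big_ord1.
rewrite sum_Sn big_ord_recr /=.
change (phi (Cplus (sum_n f m) (f m.+1)) = \sum_(i < m.+1) phi (f i) + phi (f m.+1)).
by rewrite phi_add IH.
Qed.

Lemma phi_sumC (l : list C) : phi (sumC l) = \sum_(x <- l) phi x.
Proof.
elim: l => [|x l IH]; first by rewrite big_nil.
by rewrite big_cons /= phi_add IH.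
Qed.

Section P.
Variables (n : nat) (a : nat -> C).

Definition pP : {poly R[i]} := \sum_(j < n.+1) phi (a j) *: 'X^(n - j).

Lemma pP_eval z : phi (poly_eval n a z) = pP.[phi z].
Proof.
rewrite /poly_eval phi_sum_n /pP horner_sum; apply: eq_bigr => j _.
by rewrite phi_mul phi_pow hornerZ hornerXn.
Qed.

Lemma pP_deriv_eval z : phi (poly_deriv_eval n a z) = (pP^`()).[phi z].
Proof.
rewrite /poly_deriv_eval phi_sum_n /pP raddf_sum horner_sum; apply: eq_bigr => j _.
rewrite !minusE /= derivZ derivXn hornerZ hornerMn hornerXn.
rewrite phi_mul phi_nat phi_mul phi_pow subn1.
by rewrite mulr_natl -mulrnAr.
Qed.

Lemma pP_size : (size pP <= n.+1)%N.
Proof.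
rewrite /pP; apply: (big_ind (fun q : {poly R[i]} => (size q <= n.+1)%N)).
- by rewrite size_poly0.
- move=> p q Hp Hq; apply: leq_trans (size_polyD _ _) _; by rewrite geq_max Hp Hq.
- move=> j _; apply: leq_trans (size_scale_leq _ _) _.
  by rewrite size_polyXn ltnS leq_subr.
Qed.
End P.

Lemma logder_prod (rs : seq R[i]) (w : R[i]) :
  (\prod_(x <- rs) ('X - x%:P)).[w] != 0 ->
  (\prod_(x <- rs) ('X - x%:P))^`().[w] / (\prod_(x <- rs) ('X - x%:P)).[w]
  = \sum_(x <- rs) (w - x)^-1.
Proof.
elim: rs => [|x rs IH]; first by rewrite !big_nil derivC horner0 mul0r.
rewrite !big_cons derivM derivXsubC mul1r hornerD !hornerM !hornerXsubC.
move=> H; have Hx : w - x != 0 by move: H; rewrite mulf_eq0 negb_or => /andP[].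
have Hq : (\prod_(j <- rs) ('X - j%:P)).[w] != 0.
  by move: H; rewrite mulf_eq0 negb_or => /andP[].
rewrite -(IH Hq).
field.
by rewrite Hx Hq.
Qed.


Lemma lenE (T : Type) (l : list T) : List.length l = size l.
Proof. by elim: l => //= x l ->. Qed.
Lemma mapE (T U : Type) (f : T -> U) (l : list T) : List.map f l = map f l.
Proof. by elim: l => //= x l ->. Qed.

Lemma factorization_mc (n : nat) (a : nat -> C) (z0 : C) :
  poly_eval n a z0 <> C0 ->
  exists L : list C, (List.length L <= n)%coq_nat /\
    (forall rho, List.In rho L -> poly_eval n a rho = C0) /\
    forall z, poly_eval n a z <> C0 ->
      Cdiv (poly_deriv_eval n a z) (poly_eval n a z) =
      sumC (List.map (fun rho => Cinv (Cminus z rho)) L).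
Proof.
move=> H0.
have phi_eq0 u : phi u = 0 -> u = C0.
  by move=> /(congr1 psi); rewrite psi_phi.
set p := pP n a.
have pz : p.[phi z0] != 0.
  by apply/eqP => E; apply: H0; apply: phi_eq0; rewrite pP_eval.
have pn0 : p != 0 by apply: contraNneq pz => ->; rewrite horner0.
have [rs Hrs] := closed_field_poly_normal p.
have c0 : lead_coef p != 0 by rewrite lead_coef_eq0.
have Hsize : (size rs <= n)%N.
  by have := pP_size n a; rewrite -/p Hrs size_scale // size_prod_XsubC.
exists (List.map psi rs); split; [|split].
- by rewrite lenE mapE size_map; apply/leP.
- move=> rho /List.in_map_iff [x [<- Hx]]; apply: phi_eq0.
  rewrite pP_eval phi_psi -/p Hrs hornerZ.
  have : root (\prod_(y <- rs) ('X - y%:P)) x by rewrite root_prod_XsubC; apply/Iter.In_mem.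
  by rewrite /root => /eqP ->; rewrite mulr0.
- move=> z Hz; apply: phi_inj.
  rewrite phi_div pP_deriv_eval pP_eval phi_sumC -/p.
  have pz' : p.[phi z] != 0 by apply/eqP => E; apply: Hz; apply: phi_eq0; rewrite pP_eval.
  move: pz'; rewrite Hrs derivZ !hornerZ => pz'.
  have qz : (\prod_(y <- rs) ('X - y%:P)).[phi z] != 0.
    by move: pz'; rewrite mulf_eq0 negb_or => /andP[].
  rewrite [_ / _](_ : _ = (\prod_(y <- rs) ('X - y%:P))^`().[phi z] /
                          (\prod_(y <- rs) ('X - y%:P)).[phi z]); last first.
    by field; rewrite c0 qz.
  rewrite logder_prod // !mapE big_map big_map; apply: eq_bigr => x _.
  by rewrite phi_inv phi_sub phi_psi.
Qed.

End MC.

Lemma factorization (n : nat) (a : nat -> C) (z0 : C) :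
  poly_eval n a z0 <> RtoC 0 ->
  exists L : list C, (length L <= n)%nat /\
    (forall rho, In rho L -> poly_eval n a rho = RtoC 0) /\
    forall z, poly_eval n a z <> RtoC 0 ->
      Cdiv (poly_deriv_eval n a z) (poly_eval n a z) = sumC (map (fun rho => Cinv (Cminus z rho)) L).
Proof. exact (MC.factorization_mc n a z0). Qed.


Lemma sqrt2_le2 : sqrt 2 <= 2.
Proof.
  rewrite <- (sqrt_square 2) at 2 by lra.
  apply sqrt_le_1_alt; lra.
Qed.

Lemma is_derive_pair (f g : R -> R) (x df dg : R) :
  is_derive f x df -> is_derive g x dg ->
  is_derive (fun t => ((f t, g t) : C)) x ((df, dg) : C).
Proof.
  intros [_ Hf] [_ Hg]. split. apply is_linear_scal_l.
  intros y Hy eps.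
  assert (He : 0 < eps / 2) by (destruct eps; simpl; lra).
  specialize (Hf y Hy (mkposreal _ He)); specialize (Hg y Hy (mkposreal _ He)).
  generalize (filter_and _ _ Hf Hg). apply filter_imp. intros z [H1 H2].
  simpl in H1, H2.
  eapply Rle_trans.
  apply (norm_prod (K:=R_AbsRing) (U:=R_NormedModule) (V:=R_NormedModule)
     (minus (minus (f z) (f y)) (scal (minus z y) df))
     (minus (minus (g z) (g y)) (scal (minus z y) dg))).
  assert (Hn : 0 <= norm (minus z y)) by apply norm_ge_0.
  apply Rle_trans with (2 * (eps / 2 * norm (minus z y))).
  apply Rmult_le_compat. apply sqrt_pos. apply Rmax_case; apply norm_ge_0.
  apply sqrt2_le2. apply Rmax_lub; assumption.
  apply Req_le. change (2 * (eps / 2 * norm (minus z y)) = eps * norm (minus z y)). field.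
Qed.

Definition dpolar (r t : R) : C := (- (r * sin t), r * cos t).

Lemma is_derive_eq_l (f : R -> C) x l l' : is_derive f x l -> l = l' -> is_derive f x l'.
Proof. intros H ->; exact H. Qed.

Lemma is_derive_term (r : R) (rho : C) (t : R) :
  Cminus (polar r t) rho <> RtoC 0 ->
  is_derive (fun s => Cinv (Cminus (polar r s) rho)) t
    (Copp (Cdiv (dpolar r t) (Cmult (Cminus (polar r t) rho) (Cminus (polar r t) rho)))).
Proof.
  destruct rho as [p q]. intros Hne.
  assert (HD : (r * cos t + - p) ^ 2 + (r * sin t + - q) ^ 2 <> 0).
  { intro H. apply Hne. unfold Cminus, Cplus, Copp, polar, RtoC; simpl.
    generalize (pow2_ge_0 (r * cos t + - p)) (pow2_ge_0 (r * sin t + - q)); intros G1 G2.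
    assert (H0 : r * cos t + - p = 0) by (destruct (Req_dec (r * cos t + - p) 0) as [E|E]; [exact E| exfalso; apply (pow_nonzero _ 2 E); lra]).
    assert (H1 : r * sin t + - q = 0) by (destruct (Req_dec (r * sin t + - q) 0) as [E|E]; [exact E| exfalso; apply (pow_nonzero _ 2 E); lra]).
    rewrite H0, H1; reflexivity. }
  eapply is_derive_eq_l.
  apply (is_derive_pair (fun s => (r * cos s + - p) / ((r * cos s + - p) ^ 2 + (r * sin s + - q) ^ 2))
                         (fun s => - (r * sin s + - q) / ((r * cos s + - p) ^ 2 + (r * sin s + - q) ^ 2))).
  auto_derive; [intro H; apply HD; rewrite <- H; ring | reflexivity].
  auto_derive; [intro H; apply HD; rewrite <- H; ring | reflexivity].
  unfold Copp, Cdiv, Cmult, Cinv, Cminus, Cplus, dpolar, polar; simpl.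
  set (X := r * cos t + - p) in *. set (Y := r * sin t + - q) in *.
  assert (HD1 : X * X + Y * Y <> 0) by (intro H; apply HD; rewrite <- H; ring).
  assert (HD2 : (X * X - Y * Y) * (X * X - Y * Y) + (X * Y + Y * X) * (X * Y + Y * X) <> 0).
  { intro H. assert (H' : (X * X + Y * Y) * (X * X + Y * Y) = 0) by (rewrite <- H; ring).
    apply Rmult_integral in H'. destruct H'; contradiction. }
  f_equal; field; split; assumption.
Qed.


Definition dterm (r t : R) (rho : C) : C :=
  Copp (Cdiv (dpolar r t) (Cmult (Cminus (polar r t) rho) (Cminus (polar r t) rho))).

Lemma is_derive_sum (r : R) (L : list C) (t : R) :
  (forall rho, In rho L -> Cminus (polar r t) rho <> RtoC 0) ->
  is_derive (fun s => sumC (map (fun rho => Cinv (Cminus (polar r s) rho)) L)) t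
    (sumC (map (dterm r t) L)).
Proof.
  induction L as [|rho L IH]; intros H; simpl.
  - apply (is_derive_const (K:=R_AbsRing) (V:=prod_NormedModule R_AbsRing R_NormedModule R_NormedModule) (RtoC 0)).
  - apply (is_derive_plus (K:=R_AbsRing) (V:=prod_NormedModule R_AbsRing R_NormedModule R_NormedModule)).
    + apply is_derive_term. apply H; left; reflexivity.
    + apply IH. intros; apply H; right; assumption.
Qed.

Lemma Cmod_sumC_le (L : list C) (f : C -> C) (M : R) :
  (forall x, In x L -> Cmod (f x) <= M) ->
  Cmod (sumC (map f L)) <= INR (length L) * M.
Proof.
  induction L as [|x L IH]; intros H.
  - simpl. rewrite Cmod_0. lra.
  - change (Cmod (Cplus (f x) (sumC (map f L))) <= INR (S (length L)) * M).
    eapply Rle_trans. apply Cmod_triangle.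
    rewrite S_INR.
    assert (H1 : Cmod (f x) <= M) by (apply H; left; reflexivity).
    assert (H2 : Cmod (sumC (map f L)) <= INR (length L) * M)
      by (apply IH; intros; apply H; right; assumption).
    lra.
Qed.

Lemma Cmod_polar (r t : R) : 0 <= r -> Cmod (polar r t) = r.
Proof.
  intros Hr. unfold Cmod, polar; simpl.
  assert (H := sin2_cos2 t). unfold Rsqr in H.
  replace (r * cos t * (r * cos t * 1) + r * sin t * (r * sin t * 1)) with (r ^ 2).
  apply sqrt_pow2; assumption.
  transitivity (r ^ 2 * (sin t * sin t + cos t * cos t)); [rewrite H; ring | ring].
Qed.

Lemma Cmod_dpolar (r t : R) : 0 <= r -> Cmod (dpolar r t) = r.
Proof.
  intros Hr. unfold Cmod, dpolar; simpl.
  assert (H := sin2_cos2 t). unfold Rsqr in H.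
  replace (- (r * sin t) * (- (r * sin t) * 1) + r * cos t * (r * cos t * 1)) with (r ^ 2).
  apply sqrt_pow2; assumption.
  transitivity (r ^ 2 * (sin t * sin t + cos t * cos t)); [rewrite H; ring | ring].
Qed.

Lemma Cmod_dterm (r t : R) (rho : C) : 0 <= r -> Cminus (polar r t) rho <> RtoC 0 ->
  Cmod (dterm r t rho) = r / (Cmod (Cminus (polar r t) rho) * Cmod (Cminus (polar r t) rho)).
Proof.
  intros Hr Hne. unfold dterm. rewrite Cmod_opp, Cmod_div, Cmod_mult, Cmod_dpolar; auto.
  intro H. apply (f_equal Cmod) in H. rewrite Cmod_mult, Cmod_0 in H.
  apply Cmod_gt_0 in Hne. nra.
Qed.

Lemma Cmod_rev (z w : C) :
  Cmod w - Cmod z <= Cmod (Cminus z w) /\ Cmod z - Cmod w <= Cmod (Cminus z w).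
Proof.
  split.
  - assert (E : w = Cplus z (Copp (Cminus z w))).
    { destruct z, w; unfold Cplus, Copp, Cminus; simpl; f_equal; ring. }
    assert (H := Cmod_triangle z (Copp (Cminus z w))). rewrite <- E, Cmod_opp in H. lra.
  - assert (E : z = Cplus (Cminus z w) w).
    { destruct z, w; unfold Cplus, Copp, Cminus; simpl; f_equal; ring. }
    assert (H := Cmod_triangle (Cminus z w) w). rewrite <- E in H. lra.
Qed.



Theorem lemma2p2 (n : nat) (a : nat -> C) (A B : R) :
  (1 <= n)%nat ->
  a 0%nat <> RtoC 0 ->
  0 < A -> A < B ->
  (forall z : C, A <= Cmod z <= B -> poly_eval n a z <> RtoC 0) ->
  forall (k : nat), (k = 1%nat \/ k = 2%nat) ->
  forall theta : R,
    exists l : C,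
      is_derive (fun t : R => logder n a (A + INR k * (B - A) / 3) t) theta l /\
      Cmod l <= 9 * INR n * B / (B - A) ^ 2.
Proof.
  intros Hn Ha0 HA HAB Hroots k Hk theta.
  set (r := A + INR k * (B - A) / 3).
  assert (Hr : A + (B - A) / 3 <= r /\ r + (B - A) / 3 <= B).
  { unfold r; destruct Hk; subst k; simpl; lra. }
  assert (Hr0 : 0 <= r) by lra.
  set (d := (B - A) / 3).
  assert (Hd : 0 < d) by (unfold d; lra).
  assert (HP : forall s, poly_eval n a (polar r s) <> RtoC 0).
  { intro s. apply Hroots. rewrite Cmod_polar; lra. }
  destruct (factorization n a (polar r theta) (HP theta)) as [L [HL [HLr HLf]]].
  assert (Hdist : forall s rho, In rho L -> d <= Cmod (Cminus (polar r s) rho)).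
  { intros s rho Hin. assert (H0 := HLr rho Hin).
    destruct (Cmod_rev (polar r s) rho) as [H1 H2]. rewrite Cmod_polar in H1, H2 by lra.
    destruct (Rlt_le_dec (Cmod rho) A) as [Hlt|Hge]. unfold d in *; lra.
    destruct (Rle_lt_dec (Cmod rho) B) as [Hle|Hgt].
    exfalso. apply (Hroots rho); [split; assumption | exact H0].
    unfold d in *; lra. }
  assert (Hne : forall s rho, In rho L -> Cminus (polar r s) rho <> RtoC 0).
  { intros s rho Hin E. assert (H1 := Hdist s rho Hin). rewrite E, Cmod_0 in H1. lra. }
  exists (sumC (map (dterm r theta) L)). split.
  - apply is_derive_ext with (f := fun s => sumC (map (fun rho => Cinv (Cminus (polar r s) rho)) L)).
    + intro s. unfold logder. symmetry. apply HLf. apply HP.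
    + apply is_derive_sum. intros; apply Hne; assumption.
  - eapply Rle_trans. apply (Cmod_sumC_le L (dterm r theta) (9 * r / (B - A) ^ 2)).
    + intros rho Hin. rewrite Cmod_dterm by (auto; apply Hne; assumption).
      assert (H1 := Hdist theta rho Hin).
      set (m := Cmod (Cminus (polar r theta) rho)) in *.
      replace (9 * r / (B - A) ^ 2) with (r / (d * d)) by (unfold d; field; lra).
      unfold Rdiv. apply Rmult_le_compat_l; [lra|].
      apply Rinv_le_contravar; [nra | nra].
    + assert (HLn : INR (length L) <= INR n) by (apply le_INR; assumption).
      assert (H0 : 0 <= 9 * r / (B - A) ^ 2).
      { unfold Rdiv. apply Rmult_le_pos; [lra | apply Rlt_le, Rinv_0_lt_compat; apply pow_lt; lra]. }
      assert (H1 : 9 * r / (B - A) ^ 2 <= 9 * B / (B - A) ^ 2).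
      { unfold Rdiv. apply Rmult_le_compat_r; [apply Rlt_le, Rinv_0_lt_compat; apply pow_lt; lra | lra]. }
      replace (9 * INR n * B / (B - A) ^ 2) with (INR n * (9 * B / (B - A) ^ 2)) by (unfold Rdiv; ring).
      apply Rmult_le_compat; auto. apply pos_INR.
Qed.
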